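(* Work without the expansion bound (an expanded side $a_i$ may take any length $a_i'\ge a_i$). Let $A_1,\dots,A_k$ be $n$-dimensional boxes and $\mathcal{O}$ a set of orders of them each of which is a possible arrangement, and fix states realizing each of these arrangements. Let $s$ be the closed length of one side of one box $A$, and let $x\le s\le y$ be numbers such that every other side length occurring — every other closed side length of every box, and every expanded side length in any of the fixed states — is either less than $x$ or greater than $y$. Then for any $r$ with $x\le r\le y$, the collection obtained by replacing this side length $s$ of $A$ by $r$ can be put in every order of $\mathcal{O}$.
   Context: An $n$-dimensional box $A$ has closed side lengths $a_1\le\dots\le a_n$ (positive reals). A state of $A$ is either closed or expanded along one side $i$: $a_i$ is replaced by a length $a_i'\ge a_i$, other sides unchanged (only one side can expand). The dimension vector of a state is its side lengths sorted non-decreasingly. A box in some state fits inside another box in some state if each coordinate of the outer one's dimension vector is strictly larger than the corresponding coordinate of the inner one's. An order $X_1,\dots,X_k$ (innermost to outermost) is a possible arrangement if each box can be given a state so that $X_j$ fits inside $X_{j+1}$ for all $j$; states may differ between arrangements. *)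

(* Defs.v *)
From mathcomp Require Import all_boot all_order all_algebra.
Set Implicit Arguments. Unset Strict Implicit. Unset Printing Implicit Defensive.
Import Order.TTheory GRing.Theory Num.Theory.
Local Open Scope ring_scope.

Section Boxes.
Variable R : realFieldType.
Variable n : nat.

(* A box is given by its closed side lengths, indexed by 'I_n. *)
(* A state: None = closed; Some (i, l) = expanded along side i to length l. *)
Definition state := option ('I_n * R).

Definition valid_state (a : 'I_n -> R) (st : state) : Prop :=
  match st with None => True | Some (i, l) => a i <= l end.

Definition side_len (a : 'I_n -> R) (st : state) (i : 'I_n) : R :=
  match st with
  | None => a i
  | Some (j, l) => if i == j then l else a i
  end.

Definition dimvec (a : 'I_n -> R) (st : state) : seq R :=
  sort <=%R [seq side_len a st i | i <- enum 'I_n].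

Definition fitsb (u v : seq R) : bool :=
  all (fun m => nth 0 u m < nth 0 v m) (iota 0 n).

Variable k : nat.

Definition is_order (o : seq 'I_k) : Prop := perm_eq o (enum 'I_k).

Definition realizes (A : 'I_k -> 'I_n -> R) (o : seq 'I_k) (st : 'I_k -> state) : Prop :=
  (forall j, valid_state (A j) (st j)) /\
  sorted (fun j1 j2 => fitsb (dimvec (A j1) (st j1)) (dimvec (A j2) (st j2))) o.

Definition possible_arrangement (A : 'I_k -> 'I_n -> R) (o : seq 'I_k) : Prop :=
  exists st : 'I_k -> state, realizes A o st.

Definition replace_side (A : 'I_k -> 'I_n -> R) (j0 : 'I_k) (i0 : 'I_n) (r : R) :
  'I_k -> 'I_n -> R :=
  fun j i => if (j == j0) && (i == i0) then r else A j i.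

End Boxes.

(* Main.v *)
Require Import Defs.
From mathcomp Require Import all_boot all_order all_algebra.
From mathcomp Require Import lra.
Import Order.TTheory GRing.Theory Num.Theory.
Local Open Scope ring_scope.

Lemma sort_mono_map (R : realFieldType) (f : R -> R) (s : seq R) :
  {homo f : a b / a <= b} ->
  sort <=%R (map f s) = map f (sort <=%R s).
Proof.
move=> hf; apply: le_sorted_eq.
- by apply: sort_sorted => a b; exact: le_total.
- rewrite sorted_map; apply: sub_sorted (sort_sorted (fun a b => le_total a b) s).
  by move=> a b /hf.
- by rewrite perm_sort perm_sym; apply: perm_map; rewrite perm_sort.
Qed.

Lemma sorted_uniq_neq (T : eqType) (e : rel T) (s : seq T) :
  uniq s -> sorted e s -> sorted (fun a b => (a != b) && e a b) s.
Proof.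
case: s => // a s; elim: s a => // b t IH a /= /andP[ha hu] /andP[hab hp].
rewrite hab andbT; apply/andP; split.
  by apply/negP => /eqP ab; move: ha; rewrite ab inE eqxx.
by apply: IH.
Qed.

Theorem proposition26 (R : realFieldType) (n k : nat)
  (A : 'I_k -> 'I_n -> R) (O : seq 'I_k -> Prop)
  (st : seq 'I_k -> 'I_k -> state R n)
  (j0 : 'I_k) (i0 : 'I_n) (x y r : R) :
  (forall j i, 0 < A j i) ->
  (forall o, O o -> is_order o) ->
  (forall o, O o -> realizes A o (st o)) ->
  x <= A j0 i0 <= y ->
  (forall j i, (j, i) != (j0, i0) -> A j i < x \/ y < A j i) ->
  (forall o, O o -> forall j i l, st o j = Some (i, l) -> l < x \/ y < l) ->
  x <= r <= y ->
  forall o, O o -> possible_arrangement (replace_side A j0 i0 r) o.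
Proof.
move=> _ Hord Hreal /andP[hx hy] Hout Hst /andP[rx ry] o Oo.
set S := st o.
have [Hval Hsort] := Hreal o Oo.
have HS := Hst o Oo; rewrite -/S in Hval Hsort HS.
set a' := replace_side A j0 i0 r.
pose f := fun t : R => if (x <= t) && (t <= y) then r else t.
have fmono : {homo f : a b / a <= b}.
  move=> a b ab; rewrite /f.
  case: (boolP ((x <= a) && (a <= y))) => ha;
  case: (boolP ((x <= b) && (b <= y))) => hb; rewrite ?lexx //;
  move: ha hb; rewrite ?negb_and -?ltNge.
  - by move=> /andP[h1 h2] /orP[] h; lra.
  - by move=> /orP[] h /andP[h1 h2]; lra.
have fout : forall t, t < x \/ y < t -> f t = t.
  move=> t ht; rewrite /f; case: ifP => // /andP[h1 h2]; lra.
have H1 : forall j i, side_len (a' j) (S j) i = f (side_len (A j) (S j) i).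
  move=> j i; rewrite /side_len /a' /replace_side.
  case E: (S j) => [[i1 l]|].
    case: ifP => _; first by rewrite fout //; exact: HS E.
    case: ifP => h.
      by case/andP: h => /eqP -> /eqP ->; rewrite /f hx hy.
    by rewrite fout //; apply: Hout; rewrite xpair_eqE h.
  case: ifP => h.
    by case/andP: h => /eqP -> /eqP ->; rewrite /f hx hy.
  by rewrite fout //; apply: Hout; rewrite xpair_eqE h.
have H2 : forall j i, x <= side_len (A j) (S j) i <= y -> j = j0.
  move=> j i /andP[h1 h2]; move: h1 h2; rewrite /side_len.
  case E: (S j) => [[i1 l]|].
    case: ifP => _.
      by move=> h1 h2; case: (HS _ _ _ E) => h; exfalso; lra.
    move=> h1 h2; case: (boolP ((j, i) == (j0, i0))).
      by rewrite xpair_eqE => /andP[/eqP]. 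
    by move/Hout => [] h; exfalso; lra.
  move=> h1 h2; case: (boolP ((j, i) == (j0, i0))).
    by rewrite xpair_eqE => /andP[/eqP].
  by move/Hout => [] h; exfalso; lra.
have Hdim : forall j, dimvec (a' j) (S j) = map f (dimvec (A j) (S j)).
  move=> j; rewrite /dimvec -sort_mono_map // -map_comp.
  by congr sort; apply: eq_map => i /=; rewrite H1.
have Hsize : forall j, size (dimvec (A j) (S j)) = n.
  by move=> j; rewrite /dimvec size_sort size_map size_enum_ord.
have Hmem : forall j m, (m < n)%N -> exists i,
    nth 0 (dimvec (A j) (S j)) m = side_len (A j) (S j) i.
  move=> j m hm.
  have : nth 0 (dimvec (A j) (S j)) m \in dimvec (A j) (S j).
    by apply: mem_nth; rewrite Hsize.
  by rewrite /dimvec mem_sort => /mapP[i _ ->]; exists i.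
exists S; split.
  move=> j; move: (Hval j); rewrite /valid_state /a' /replace_side.
  case E: (S j) => [[i1 l]|] //.
  case: ifP => // /andP[/eqP ej /eqP ei]; subst j i1 => h.
  case: (HS _ _ _ E) => h'; lra.
have Hu : uniq o by rewrite (perm_uniq (Hord o Oo)) enum_uniq.
move: (@sorted_uniq_neq _ _ _ Hu Hsort); apply: sub_sorted.
move=> j1 j2 /andP[hne hfit]; move: hfit; rewrite /fitsb !Hdim.
move=> /allP hall; apply/allP => m hm.
have hmn : (m < n)%N by move: hm; rewrite mem_iota add0n.
move: (hall m hm); rewrite !(nth_map 0) ?Hsize //.
have [i1 ->] := Hmem j1 m hmn.
have [i2 ->] := Hmem j2 m hmn.
set u := side_len _ _ i1; set v := side_len _ _ i2.
move=> uv.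
case: (boolP ((x <= u) && (u <= y))) => hu.
  have ej1 := H2 _ _ hu.
  case: (boolP ((x <= v) && (v <= y))) => hv.
    by have ej2 := H2 _ _ hv; move: hne; rewrite ej1 ej2 eqxx.
  rewrite /f (negbTE hv) hu; move: hu hv => /andP[h1 h2].
  rewrite negb_and -!ltNge => /orP[] h; lra.
rewrite /f (negbTE hu).
case: (boolP ((x <= v) && (v <= y))) => hv.
  move: hv hu => /andP[h1 h2]; rewrite negb_and -!ltNge => /orP[] h; lra.
by [] || exact: uv.
Qed.
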